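(* Let $G$ be a finite simple graph on $[d]$. Then $L_G : x_{\emptyset}^{\infty}=J_G : x_{\emptyset}^{\infty}=\langle [I_G]_2\rangle : x_{\emptyset}^{\infty}=I_G.$
   Context: A stable set of $G$ is a subset of $[d]$ with no edge of $G$ (including $\emptyset$ and singletons); $S(G)$ is the set of stable sets; $R[G]=\mathbb{K}[x_S : S\in S(G)]$ over a field $\mathbb{K}$, all variables of degree $1$. $I_G$ is the kernel of $\pi:R[G]\to\mathbb{K}[t_1,\dots,t_d,s]$, $\pi(x_S)=s\prod_{j\in S}t_j$. $\langle [I_G]_2\rangle$ is the ideal generated by the degree-$2$ homogeneous elements of $I_G$. $J_G$ is the ideal generated by all binomials $x_{S_1}x_{S_2}-x_{S_3}x_{S_4}$ with $S_i\in S(G)$, $S_1\cap S_2=S_3\cap S_4=\emptyset$, $S_1\cup S_2=S_3\cup S_4$ (i.e. ${\bf x}_f-{\bf x}_g$ for $2$-colorings $f,g$ of a common induced subgraph, where ${\bf x}_f=x_{f^{-1}(1)}x_{f^{-1}(2)}$). $L_G=\langle x_{S\setminus\{i\}}x_{\{i\}}-x_Sx_\emptyset : i\in S\in S(G),\ |S|\ge2\rangle$. For an ideal $I$ and polynomial $h$, $I:h^\infty=\{p : h^np\in I \text{ for some } n>0\}$. *)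

(* Defs.v *)
From HB Require Import structures.
From mathcomp Require Import all_boot all_order all_algebra.
From mathcomp Require Import mpoly.
Set Implicit Arguments. Unset Strict Implicit. Unset Printing Implicit Defensive.
Import Order.TTheory GRing.Theory.
Local Open Scope ring_scope.

Definition ideal_gen (R : comNzRingType) (P : R -> Prop) : R -> Prop :=
  fun p => exists s : seq (R * R),
      (forall x, x \in s -> P x.2) /\ p = \sum_(x <- s) x.1 * x.2.

Definition saturation (R : comNzRingType) (I : R -> Prop) (h : R) : R -> Prop :=
  fun p => exists n : nat, (0 < n)%N /\ I (h ^+ n * p).

Definition simple_graph (d : nat) (e : rel 'I_d) : Prop :=
  irreflexive e /\ ssrbool.symmetric e.

Definition is_stable (d : nat) (e : rel 'I_d) (S : {set 'I_d}) : bool :=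
  [forall i in S, forall j in S, ~~ e i j].

Definition stables (d : nat) (e : rel 'I_d) : {set {set 'I_d}} :=
  [set S | is_stable e S].

Lemma set0_stable (d : nat) (e : rel 'I_d) : (set0 : {set 'I_d}) \in stables e.
Proof.
rewrite inE; apply/forallP => i; apply/implyP; by rewrite inE.
Qed.

Definition nvar (d : nat) (e : rel 'I_d) : nat := #|stables e|.

(* R[G] = K[x_S : S \in S(G)] *)
Definition RG (K : fieldType) (d : nat) (e : rel 'I_d) := {mpoly K[nvar e]}.

(* index of the variable x_S (meaningful for stable S) *)
Definition vidx (d : nat) (e : rel 'I_d) (S : {set 'I_d}) : 'I_(nvar e) :=
  enum_rank_in (set0_stable e) S.

Definition xvar (K : fieldType) (d : nat) (e : rel 'I_d) (S : {set 'I_d})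
  : RG K e := 'X_(vidx e S).

(* target ring K[t_1..t_d, s]: t_j = 'X_(j), s = 'X_(d) *)
Definition tvar (K : fieldType) (d : nat) (j : 'I_d) : {mpoly K[d.+1]} :=
  'X_(widen_ord (leqnSn d) j).
Definition svar (K : fieldType) (d : nat) : {mpoly K[d.+1]} := 'X_(ord_max).

Definition pi_img (K : fieldType) (d : nat) (e : rel 'I_d) (i : 'I_(nvar e))
  : {mpoly K[d.+1]} :=
  svar K d * \prod_(j in (enum_val i : {set 'I_d})) tvar K j.

Definition piG (K : fieldType) (d : nat) (e : rel 'I_d) (p : RG K e)
  : {mpoly K[d.+1]} :=
  mmap (fun c : K => c%:MP) (@pi_img K d e) p.

Definition IG (K : fieldType) (d : nat) (e : rel 'I_d) : RG K e -> Prop :=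
  fun p => piG p = 0.

Definition IG2 (K : fieldType) (d : nat) (e : rel 'I_d) : RG K e -> Prop :=
  ideal_gen (fun p : RG K e => IG p /\ p \is @ishomog1 _ K 2 mdeg).

Definition JG (K : fieldType) (d : nat) (e : rel 'I_d) : RG K e -> Prop :=
  ideal_gen (fun p : RG K e => exists S1 S2 S3 S4 : {set 'I_d},
    [/\ [/\ S1 \in stables e, S2 \in stables e, S3 \in stables e
          & S4 \in stables e],
        S1 :&: S2 = set0, S3 :&: S4 = set0, S1 :|: S2 = S3 :|: S4
      & p = xvar K e S1 * xvar K e S2 - xvar K e S3 * xvar K e S4]).

Definition LG (K : fieldType) (d : nat) (e : rel 'I_d) : RG K e -> Prop :=
  ideal_gen (fun p : RG K e => exists (S : {set 'I_d}) (i : 'I_d),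
    [/\ S \in stables e, i \in S, (2 <= #|S|)%N
      & p = xvar K e (S :\ i) * xvar K e [set i] - xvar K e S * xvar K e set0]).

(* Main.v *)
Require Import Defs.
From HB Require Import structures.
From mathcomp Require Import all_boot all_order all_algebra.
From mathcomp Require Import mpoly.
From mathcomp Require Import ring.
Set Implicit Arguments. Unset Strict Implicit. Unset Printing Implicit Defensive.
Import Order.TTheory GRing.Theory.
Local Open Scope ring_scope.

Lemma ig0 (R : comNzRingType) (P : R -> Prop) : ideal_gen P 0.
Proof. by exists [::]; rewrite big_nil. Qed.

Lemma igD (R : comNzRingType) (P : R -> Prop) a b :
  ideal_gen P a -> ideal_gen P b -> ideal_gen P (a + b).
Proof.
move=> [s1 [h1 ->]] [s2 [h2 ->]]; exists (s1 ++ s2); split; last by rewrite big_cat.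
by move=> x; rewrite mem_cat => /orP [/h1|/h2].
Qed.

Lemma igM (R : comNzRingType) (P : R -> Prop) r a :
  ideal_gen P a -> ideal_gen P (r * a).
Proof.
move=> [s [h ->]]; exists [seq (r * x.1, x.2) | x <- s]; split.
  by move=> x /mapP [y /h hy ->].
by rewrite big_map mulr_sumr; apply: eq_bigr => x _; rewrite mulrA.
Qed.

Lemma igN (R : comNzRingType) (P : R -> Prop) a :
  ideal_gen P a -> ideal_gen P (- a).
Proof. by move=> h; rewrite -mulN1r; apply: igM. Qed.

Lemma igB (R : comNzRingType) (P : R -> Prop) a b :
  ideal_gen P a -> ideal_gen P b -> ideal_gen P (a - b).
Proof. by move=> ha hb; apply: igD => //; apply: igN. Qed.

Lemma igG (R : comNzRingType) (P : R -> Prop) a : P a -> ideal_gen P a.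
Proof.
by move=> h; exists [:: (1, a)]; split; [move=> x; rewrite inE => /eqP -> | rewrite big_seq1 mul1r].
Qed.

Lemma ig_sum (R : comNzRingType) (P : R -> Prop) (I : eqType) (s : seq I) (F : I -> R) :
  (forall i, i \in s -> ideal_gen P (F i)) -> ideal_gen P (\sum_(i <- s) F i).
Proof.
elim: s => [|x s IH] h; first by rewrite big_nil; apply: ig0.
rewrite big_cons; apply: igD; first by apply: h; rewrite inE eqxx.
by apply: IH => i hi; apply: h; rewrite inE hi orbT.
Qed.

Lemma ig_mono (R : comNzRingType) (P Q : R -> Prop) a :
  (forall x, P x -> Q x) -> ideal_gen P a -> ideal_gen Q a.
Proof. by move=> hPQ [s [h ->]]; exists s; split => // x /h /hPQ. Qed.

Lemma igMM (R : comNzRingType) (P : R -> Prop) a b c d :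
  ideal_gen P (a - b) -> ideal_gen P (c - d) -> ideal_gen P (a * c - b * d).
Proof.
move=> h1 h2; have -> : a * c - b * d = c * (a - b) + b * (c - d) by ring.
by apply: igD; apply: igM.
Qed.

Lemma enum_val_vidx d (e : rel 'I_d) S : S \in stables e -> enum_val (vidx e S) = S.
Proof. by move=> hS; rewrite /vidx enum_rankK_in. Qed.

Lemma xvar_enum K d (e : rel 'I_d) (i : 'I_(nvar e)) : xvar K e (enum_val i) = 'X_i.
Proof. by rewrite /xvar /vidx enum_valK_in. Qed.

Lemma stable_enum d (e : rel 'I_d) (i : 'I_(nvar e)) : enum_val i \in stables e.
Proof. exact: (enum_valP i). Qed.

Lemma stable_sub d (e : rel 'I_d) S (T : {set 'I_d}) : S \in stables e -> T \subset S -> T \in stables e.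
Proof.
rewrite !inE => /forallP hS /subsetP hT; apply/forallP => i; apply/implyP => hi.
apply/forallP => j; apply/implyP => hj.
by have /implyP /(_ (hT _ hi)) /forallP /(_ j) /implyP /(_ (hT _ hj)) := hS i.
Qed.

Lemma stable1 d (e : rel 'I_d) i : irreflexive e -> [set i] \in stables e.
Proof.
move=> irr; rewrite inE; apply/forallP => a; apply/implyP; rewrite inE => /eqP ->.
by apply/forallP => b; apply/implyP; rewrite inE => /eqP ->; rewrite irr.
Qed.

Lemma piG_x K d (e : rel 'I_d) S : S \in stables e ->
  piG (xvar K e S) = svar K d * \prod_(j in S) tvar K j.
Proof.
move=> hS; rewrite /piG /xvar.
have -> : mmap (fun c : K => c%:MP) (pi_img K (e:=e)) =1 mmap (@mpolyC _ K) (pi_img K (e:=e)) by [].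
by rewrite mmapX mmap1U /pi_img enum_val_vidx.
Qed.

Lemma LB K d (e : rel 'I_d) S : irreflexive e -> S \in stables e ->
  LG (xvar K e set0 ^+ #|S| * xvar K e S - xvar K e set0 * \prod_(j in S) xvar K e [set j]).
Proof.
move=> irr; move: {2}#|S| (erefl #|S|) => k; elim: k S => [|k IH] S hk hS.
  have /eqP -> : S == set0 by rewrite -cards_eq0 -hk.
  by rewrite big_set0 cards0 expr0 mul1r mulr1 subrr; apply: ig0.
have : (0 < #|S|)%N by rewrite hk.
rewrite card_gt0 => /set0Pn [i hi].
set S' := S :\ i.
have hS' : S' \in stables e by apply: stable_sub hS _; apply: subD1set.
have hk' : #|S'| = k by rewrite /S' (cardsD1 i S) hi in hk; case: hk.
set x0 := xvar K e set0.
set g := xvar K e S' * xvar K e [set i] - xvar K e S * x0.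
have hg : LG g.
  case: (leqP 2 #|S|) => h2.
    by apply: igG; exists S, i; split.
  have hS1 : S = [set i].
    apply/eqP; rewrite eq_sym eqEcard sub1set hi cards1 /=; by [].
  have hS'0 : S' = set0 by rewrite /S' hS1 setDv.
  by rewrite /g hS'0 hS1 /x0 mulrC subrr; apply: ig0.
have hP : \prod_(j in S) xvar K e [set j] = xvar K e [set i] * \prod_(j in S') xvar K e [set j].
  rewrite (bigD1 i hi) /=; congr (_ * _); apply: eq_bigl => j.
  by rewrite /S' !inE andbC.
have -> : x0 ^+ #|S| * xvar K e S - x0 * \prod_(j in S) xvar K e [set j]
  = (- x0 ^+ #|S'|) * g + xvar K e [set i] * (x0 ^+ #|S'| * xvar K e S' - x0 * \prod_(j in S') xvar K e [set j]).
  rewrite hP hk hk' /g exprS; ring.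
by apply: igD; apply: igM => //; apply: IH.
Qed.

Lemma igPow (R : comNzRingType) (P : R -> Prop) a b k :
  ideal_gen P (a - b) -> ideal_gen P (a ^+ k - b ^+ k).
Proof.
move=> h; elim: k => [|k IH]; first by rewrite !expr0 subrr; apply: ig0.
by rewrite !exprS; apply: igMM.
Qed.

Lemma igProd (R : comNzRingType) (P : R -> Prop) (I : Type) (r : seq I) (F G : I -> R) :
  (forall i, ideal_gen P (F i - G i)) ->
  ideal_gen P (\prod_(i <- r) F i - \prod_(i <- r) G i).
Proof.
move=> h; elim: r => [|x r IH]; first by rewrite !big_nil subrr; apply: ig0.
by rewrite !big_cons; apply: igMM.
Qed.

Definition tau_img K d (e : rel 'I_d) (i : 'I_(nvar e)) : RG K e :=
  xvar K e set0 * \prod_(j in enum_val i) xvar K e [set j].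

Definition wt d (e : rel 'I_d) (m : 'X_{1..nvar e}) : nat :=
  (\sum_(i < nvar e) #|enum_val i| * m i)%N.

Lemma LM K d (e : rel 'I_d) (m : 'X_{1..nvar e}) : irreflexive e ->
  LG (xvar K e set0 ^+ wt m * 'X_[m] - \prod_(i < nvar e) (tau_img K i) ^+ m i).
Proof.
move=> irr; rewrite mpolyXE_id /wt -prodrXr.
under eq_bigr => i _ do rewrite exprM.
rewrite -big_split /=.
apply: igProd => i; rewrite -exprMn; apply: igPow.
by rewrite -xvar_enum /tau_img; apply: LB => //; apply: stable_enum.
Qed.

Definition rho_img (K : fieldType) d (e : rel 'I_d) (k : 'I_d.+1) : RG K e :=
  if unlift ord_max k is Some j then xvar K e [set j] else xvar K e set0.

Definition rho (K : fieldType) d (e : rel 'I_d) (f : {mpoly K[d.+1]}) : RG K e :=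
  mmap (@mpolyC _ K) (@rho_img K d e) f.

HB.instance Definition _ (K : fieldType) d (e : rel 'I_d) :=
  GRing.RMorphism.copy (@rho K d e) (mmap (@mpolyC _ K) (@rho_img K d e)).

Lemma rho_svar (K : fieldType) d (e : rel 'I_d) : rho e (svar K d) = xvar K e set0.
Proof. by rewrite /rho /svar mmapX mmap1U /rho_img unlift_none. Qed.

Lemma rho_tvar (K : fieldType) d (e : rel 'I_d) j : rho e (tvar K j) = xvar K e [set j].
Proof. rewrite /rho /tvar mmapX mmap1U /rho_img.
have -> : widen_ord (leqnSn d) j = lift ord_max j by apply: val_inj; rewrite /= /bump leqNgt ltn_ord.
by rewrite liftK. Qed.

Lemma rho_pi (K : fieldType) d (e : rel 'I_d) (m : 'X_{1..nvar e}) :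
  rho e (mmap1 (@pi_img K d e) m) = \prod_(i < nvar e) (tau_img K i) ^+ m i.
Proof.
rewrite /mmap1 rmorph_prod; apply: eq_bigr => i _; rewrite rmorphXn; congr (_ ^+ _).
rewrite /pi_img rmorphM rmorph_prod /= (rho_svar K e) /tau_img; congr (_ * _); apply: eq_bigr => j _; exact: rho_tvar.
Qed.

Definition bexp d (e : rel 'I_d) (i : 'I_(nvar e)) : 'X_{1..d.+1} :=
  (U_(ord_max) + \sum_(j in enum_val i) U_(widen_ord (leqnSn d) j))%MM.

Definition mt d (e : rel 'I_d) (m : 'X_{1..nvar e}) : 'X_{1..d.+1} :=
  (\sum_(i < nvar e) (bexp i *+ m i))%MM.

Definition tdeg d (v : 'X_{1..d.+1}) : nat := (\sum_(j < d) v (widen_ord (leqnSn d) j))%N.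

Lemma pi_img_X (K : fieldType) d (e : rel 'I_d) (i : 'I_(nvar e)) : pi_img K i = 'X_[bexp i].
Proof.
rewrite /pi_img /bexp mpolyXD; congr (_ * _).
by rewrite (big_morph (@mpolyX _ K) (@mpolyXD _ K) (@mpolyX0 _ K)).
Qed.

Lemma mmap1_pi (K : fieldType) d (e : rel 'I_d) (m : 'X_{1..nvar e}) :
  mmap1 (@pi_img K d e) m = 'X_[mt m].
Proof.
rewrite /mmap1 /mt -mprodXnE; apply: eq_bigr => i _; by rewrite pi_img_X.
Qed.

Lemma tdeg_bexp d (e : rel 'I_d) (i : 'I_(nvar e)) : tdeg (bexp i) = #|enum_val i|.
Proof.
rewrite /tdeg /bexp (eq_bigr _ (fun j _ => mnmDE _ _ _)) big_split /=.
rewrite big1 ?add0n; last first.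
  move=> j _; rewrite mnm1E; case: eqP => // /(congr1 val) /= h.
  by move: (ltn_ord j); rewrite -h ltnn.
rewrite (eq_bigr _ (fun j _ => mnm_sumE _ _ _ _)) /= exchange_big /= -sum1_card.
apply: eq_bigr => j _.
rewrite (bigD1 j) //= mnm1E eqxx big1 ?addn0 // => k hk.
rewrite mnm1E; case: eqP => // /(congr1 val) /= h.
by move: hk; rewrite (val_inj h) eqxx.
Qed.

Lemma tdeg_mt d (e : rel 'I_d) (m : 'X_{1..nvar e}) : tdeg (mt m) = wt m.
Proof.
rewrite /tdeg /mt /wt.
under eq_bigr => j _ do rewrite mnm_sumE.
rewrite exchange_big /=; apply: eq_bigr => i _.
under eq_bigr => j _ do rewrite mulmnE.
by rewrite -big_distrl /= -/(tdeg (bexp i)) tdeg_bexp.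
Qed.

Definition FN (K : fieldType) d (e : rel 'I_d) (N : nat) (v : 'X_{1..d.+1}) : RG K e :=
  xvar K e set0 ^+ (N - tdeg v) * rho e 'X_[v].

Definition Lam (K : fieldType) d (e : rel 'I_d) (k N : nat) (f : {mpoly K[d.+1]}) : RG K e :=
  \sum_(v : 'X_{1..d.+1 < k}) f@_v *: FN K e N v.

Lemma Lam0 (K : fieldType) d (e : rel 'I_d) k N : Lam e k N (0 : {mpoly K[d.+1]}) = 0.
Proof. by rewrite /Lam big1 // => v _; rewrite mcoeff0 scale0r. Qed.

Lemma LamDZ (K : fieldType) d (e : rel 'I_d) k N (c : K) f g :
  Lam e k N (c *: f + g) = c *: Lam e k N f + Lam e k N g.
Proof.
rewrite /Lam scaler_sumr -big_split /=; apply: eq_bigr => v _.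
by rewrite mcoeffD mcoeffZ scalerDl scalerA.
Qed.

Lemma Lam_sum (K : fieldType) d (e : rel 'I_d) k N (I : Type) (s : seq I) (c : I -> K) g :
  Lam e k N (\sum_(x <- s) c x *: g x) = \sum_(x <- s) c x *: Lam e k N (g x).
Proof.
elim: s => [|x s IH]; first by rewrite !big_nil Lam0.
by rewrite !big_cons LamDZ IH.
Qed.

Lemma Lam_X (K : fieldType) d (e : rel 'I_d) k N (v : 'X_{1..d.+1}) :
  (mdeg v < k)%N -> Lam e k N ('X_[v] : {mpoly K[d.+1]}) = FN K e N v.
Proof.
move=> hv; rewrite /Lam (bigD1 (BMultinom hv)) //= mcoeffX eqxx scale1r big1 ?addr0 // => w hw.
rewrite mcoeffX; case: eqP => [h|]; last by rewrite scale0r.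
by case/eqP: hw; apply: val_inj; rewrite /= h.
Qed.

Lemma IG_satL (K : fieldType) d (e : rel 'I_d) (p : RG K e) :
  irreflexive e -> IG p -> saturation (@LG K d e) (xvar K e set0) p.
Proof.
move=> irr hp.
set x0 := xvar K e set0.
set N := (\max_(m <- msupp p) wt m)%N.
set k := (\max_(m <- msupp p) (mdeg (mt m)).+1)%N.
have hpi : piG p = \sum_(m <- msupp p) p@_m *: 'X_[mt m].
  rewrite /piG /mmap; apply: eq_bigr => m _; by rewrite mul_mpolyC mmap1_pi.
have key : LG (x0 ^+ N * p - Lam e k N (piG p)).
  rewrite hpi Lam_sum {1}(mpolyE p) mulr_sumr -sumrB.
  apply: ig_sum => m hm.
  rewrite Lam_X; last by apply: (@leq_bigmax_seq _ _ xpredT (fun m => (mdeg (mt m)).+1)).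
  rewrite -scalerAr -scalerBr -mul_mpolyC; apply: igM.
  rewrite /FN tdeg_mt -(mmap1_pi K) rho_pi.
  have hw : (wt m <= N)%N by rewrite /N; exact: (@leq_bigmax_seq _ _ (fun _ => true) (@wt d e) m hm).
  rewrite -{1}(subnK hw) exprD -mulrA -mulrBr; apply: igM; exact: LM.
move: key; rewrite hp Lam0 subr0 => key.
exists N.+1; split => //; rewrite exprS -mulrA; exact: igM.
Qed.

HB.instance Definition _ (K : fieldType) d (e : rel 'I_d) :=
  GRing.RMorphism.copy (@piG K d e) (mmap (@mpolyC _ K) (@pi_img K d e)).

Lemma IG_ideal (K : fieldType) d (e : rel 'I_d) (P : RG K e -> Prop) p :
  (forall x, P x -> IG x) -> ideal_gen P p -> IG p.
Proof.
move=> hP [s [hs ->]]; rewrite /IG rmorph_sum big_seq big1 // => x hx.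
by rewrite rmorphM /= (hP _ (hs _ hx)) mulr0.
Qed.

Lemma sat_IG (K : fieldType) d (e : rel 'I_d) (I : RG K e -> Prop) p :
  (forall x, I x -> IG x) -> saturation I (xvar K e set0) p -> IG p.
Proof.
move=> hI [n [hn /hI]]; rewrite /IG rmorphM rmorphXn /= piG_x ?set0_stable //.
rewrite big_set0 mulr1 => /eqP; rewrite mulf_eq0 expf_eq0 hn /= => /orP [/eqP h|/eqP //].
have := congr1 (mcoeff U_(ord_max)) h; rewrite /svar mcoeffX eqxx mcoeff0 => /eqP.
by rewrite oner_eq0.
Qed.

Lemma sat_mono (R : comNzRingType) (I J : R -> Prop) h p :
  (forall x, I x -> J x) -> saturation I h p -> saturation J h p.
Proof. by move=> hIJ [n [hn /hIJ]]; exists n. Qed.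

Lemma piG_pair (K : fieldType) d (e : rel 'I_d) S1 S2 :
  S1 \in stables e -> S2 \in stables e -> S1 :&: S2 = set0 ->
  piG (xvar K e S1 * xvar K e S2) = svar K d ^+ 2 * \prod_(j in S1 :|: S2) tvar K j.
Proof.
move=> h1 h2 h12; rewrite rmorphM /= !piG_x //.
have -> : \prod_(j in S1 :|: S2) tvar K j = \prod_(j in [predU S1 & S2]) tvar K j.
  by apply: eq_bigl => j; rewrite !inE.
rewrite bigU /=; last by rewrite -setI_eq0 h12.
by rewrite expr2; ring.
Qed.

Lemma JG_gen_IG (K : fieldType) d (e : rel 'I_d) (p : RG K e) :
  (exists S1 S2 S3 S4 : {set 'I_d},
    [/\ [/\ S1 \in stables e, S2 \in stables e, S3 \in stables e
          & S4 \in stables e],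
        S1 :&: S2 = set0, S3 :&: S4 = set0, S1 :|: S2 = S3 :|: S4
      & p = xvar K e S1 * xvar K e S2 - xvar K e S3 * xvar K e S4]) -> IG p.
Proof.
move=> [S1 [S2 [S3 [S4 [[h1 h2 h3 h4] h12 h34 hU ->]]]]].
by rewrite /IG rmorphB /= !piG_pair // hU subrr.
Qed.

Lemma LG_JG (K : fieldType) d (e : rel 'I_d) (p : RG K e) :
  irreflexive e -> LG p -> JG p.
Proof.
move=> irr; apply: ig_mono => x [S [i [hS hi _ ->]]].
exists (S :\ i), [set i], S, set0; split.
- split; [ by apply: stable_sub hS _; apply: subD1set
         | exact: stable1 | exact: hS | exact: set0_stable ].
- by apply/setP => j; rewrite !inE; case: (j =P i) => [->|]; rewrite ?eqxx ?andbF ?andbT // => /eqP /negbTE ->; rewrite andbF.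
- by rewrite setI0.
- by rewrite setU0 setUC setD1K.
- by [].
Qed.

Lemma xx_homog (K : fieldType) d (e : rel 'I_d) S1 S2 :
  xvar K e S1 * xvar K e S2 \is @ishomog1 _ K 2 mdeg.
Proof. by apply: (@dhomogM _ _ _ 1 _ 1); rewrite dhomogX; apply/eqP; exact: mdeg1. Qed.

Lemma JG_IG2 (K : fieldType) d (e : rel 'I_d) (p : RG K e) :
  JG p -> IG2 p.
Proof.
apply: ig_mono => x hx; split; first exact: JG_gen_IG.
move: hx => [S1 [S2 [S3 [S4 [_ _ _ _ ->]]]]].
by apply: rpredB; apply: xx_homog.
Qed.

Unset Implicit Arguments.
Theorem lemma4p1 (K : fieldType) (d : nat) (e : rel 'I_d) :
  simple_graph e ->
  (forall p : RG K e,
      saturation (@LG K d e) (@xvar K d e set0) p <-> @IG K d e p) /\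
  (forall p : RG K e,
      saturation (@JG K d e) (@xvar K d e set0) p <-> @IG K d e p) /\
  (forall p : RG K e,
      saturation (@IG2 K d e) (@xvar K d e set0) p <-> @IG K d e p).
Proof.
move=> [irr _].
have hIG2 : forall x : RG K e, IG2 x -> IG x.
  by move=> x; apply: IG_ideal => y [].
have hJ : forall x : RG K e, JG x -> IG x.
  by move=> x hx; apply: hIG2; apply: JG_IG2.
have hL : forall x : RG K e, LG x -> IG x.
  by move=> x hx; apply: hJ; apply: LG_JG.
split; [|split] => p; split.
- exact: sat_IG.
- exact: IG_satL.
- exact: sat_IG.
- by move=> hp; apply: sat_mono (IG_satL irr hp) => x; apply: LG_JG.
- exact: sat_IG.
- move=> hp; apply: sat_mono (IG_satL irr hp) => x hx.
  by apply: JG_IG2; apply: LG_JG.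
Qed.
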